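(* Let $x_0\in\mathbb{R}\cup\{+\infty\}$, $T<x_0$, $I:=[T,x_0)$, let $\phi_1,\phi_2\in C^1(I)$ with $\phi_2(x)=o(\phi_1(x))$ as $x\to x_0$, $\phi_1(x)\neq0$, $\phi_2(x)\neq0$ and $W(\phi_1,\phi_2;x)\neq0$ for all $x\in I$, and let $f$ be absolutely continuous on every compact subinterval of $I$. Assume moreover $$\phi_2'(x)=o(\phi_1'(x)),\qquad \frac{\phi_1'(x)}{\phi_1(x)}=O\Big(\frac{\phi_2'(x)}{\phi_2(x)}\Big)\qquad(x\to x_0).$$ If, for real $a_1,a_2$, $$f(x)=a_1\phi_1(x)+a_2\phi_2(x)+o(\phi_2(x)),\qquad \Big(\frac{f(x)}{\phi_1(x)}\Big)'=a_2\Big(\frac{\phi_2(x)}{\phi_1(x)}\Big)'+o\Big(\Big(\frac{\phi_2(x)}{\phi_1(x)}\Big)'\Big)\qquad(x\to x_0),$$ then $f'(x)=a_1\phi_1'(x)+a_2\phi_2'(x)+o(\phi_2'(x))$ as $x\to x_0$ (together with $f(x)=a_1\phi_1(x)+a_2\phi_2(x)+o(\phi_2(x))$).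
   Context: Limits and $O,o$ relations as $x\to x_0$ are taken for $x<x_0$, over points where the functions are defined (e.g. where $f$ is differentiable). $W(g,h;x):=g(x)h'(x)-g'(x)h(x)$. *)

(* Defs.v *)
From HB Require Import structures.
From mathcomp Require Import all_boot all_order all_algebra.
From mathcomp Require Import all_classical all_reals all_analysis.
Set Implicit Arguments. Unset Strict Implicit. Unset Printing Implicit Defensive.
Import Order.TTheory GRing.Theory Num.Theory.
Import numFieldNormedType.Exports.
Local Open Scope classical_set_scope.
Local Open Scope ring_scope.

(* "P x holds for all x < x0 sufficiently close to x0" (the left filter at
   x0 when x0 is finite, the filter at +oo when x0 = +oo). *)
Definition near_left (R : realType) (x0 : \bar R) (P : R -> Prop) : Prop :=
  exists t : R, (t%:E < x0)%E /\ forall x : R, t < x -> (x%:E < x0)%E -> P x.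

Definition littleo_left (R : realType) (x0 : \bar R) (D : R -> Prop)
  (g h : R -> R) : Prop :=
  forall e : R, 0 < e -> near_left x0 (fun x => D x -> `|g x| <= e * `|h x|).

Definition bigO_left (R : realType) (x0 : \bar R) (D : R -> Prop)
  (g h : R -> R) : Prop :=
  exists C : R, 0 < C /\ near_left x0 (fun x => D x -> `|g x| <= C * `|h x|).

Definition C1_on (R : realType) (T : R) (x0 : \bar R) (phi dphi : R -> R) : Prop :=
  [/\ forall x : R, T < x -> (x%:E < x0)%E -> is_derive x 1 phi (dphi x),
      (fun h : R => h^-1 * (phi (T + h) - phi T)) @ 0^'+ --> dphi T &
      {within [set x : R | T <= x /\ (x%:E < x0)%E], continuous dphi}].

Definition abs_cont_on (R : realType) (a b : R) (f : R -> R) : Prop :=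
  forall e : R, 0 < e -> exists2 d : R, 0 < d &
    forall (n : nat) (u v : 'I_n -> R),
      (forall k, a <= u k /\ u k <= v k /\ v k <= b) ->
      (forall j k, j != k -> v j <= u k \/ v k <= u j) ->
      \sum_(k < n) (v k - u k) < d ->
      \sum_(k < n) `|f (v k) - f (u k)| < e.

Definition wronsk (R : realType) (g dg h dh : R -> R) (x : R) : R :=
  g x * dh x - dg x * h x.

(* Main.v *)
Require Import Defs.
From HB Require Import structures.
From mathcomp Require Import all_boot all_order all_algebra.
From mathcomp Require Import all_classical all_reals all_analysis.
From mathcomp Require Import ring lra.
Import Order.TTheory GRing.Theory Num.Theory.
Import numFieldNormedType.Exports.
Local Open Scope classical_set_scope.
Local Open Scope ring_scope.

Lemma quot_der {R : realType} {g p : R -> R} {x dg dp : R} : p x != 0 -> is_derive x 1 g dg -> is_derive x 1 p dp ->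
  derive1 (fun y => g y / p y) x = (dg * p x - g x * dp) / (p x)^+2.
Proof.
move=> p0 Hg Hp.
have H := is_deriveM Hg (is_deriveV p0 Hp).
rewrite derive1E.
rewrite (@derive_val _ _ _ _ _ _ _ H).
rewrite /GRing.scale /=. field. done.
Qed.

Lemma near_and {R : realType} {x0 : \bar R} {P Q : R -> Prop} :
  near_left x0 P -> near_left x0 Q -> near_left x0 (fun x => P x /\ Q x).
Proof.
move=> [t1 [h1 H1]] [t2 [h2 H2]].
exists (Num.max t1 t2); split.
  by rewrite /Num.max; case: ifP.
move=> x; rewrite gt_max => /andP[a b] c; split; [exact: H1|exact: H2].
Qed.

Theorem proposition9p2 (R : realType) (x0 : \bar R) (T : R)
  (phi1 dphi1 phi2 dphi2 f : R -> R) (a1 a2 : R) :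
  (T%:E < x0)%E ->
  C1_on T x0 phi1 dphi1 -> C1_on T x0 phi2 dphi2 ->
  littleo_left x0 (fun _ => True) phi2 phi1 ->
  (forall x : R, T <= x -> (x%:E < x0)%E ->
     [/\ phi1 x != 0, phi2 x != 0 & wronsk phi1 dphi1 phi2 dphi2 x != 0]) ->
  (forall a b : R, T <= a -> (b%:E < x0)%E -> abs_cont_on a b f) ->
  littleo_left x0 (fun _ => True) dphi2 dphi1 ->
  bigO_left x0 (fun _ => True) (fun x => dphi1 x / phi1 x)
                               (fun x => dphi2 x / phi2 x) ->
  littleo_left x0 (fun _ => True)
    (fun x => f x - (a1 * phi1 x + a2 * phi2 x)) phi2 ->
  littleo_left x0 (fun x => derivable f x 1)
    (fun x => derive1 (fun y => f y / phi1 y) x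
              - a2 * derive1 (fun y => phi2 y / phi1 y) x)
    (fun x => derive1 (fun y => phi2 y / phi1 y) x) ->
  littleo_left x0 (fun x => derivable f x 1)
    (fun x => derive1 f x - (a1 * dphi1 x + a2 * dphi2 x)) dphi2
  /\ littleo_left x0 (fun _ => True)
    (fun x => f x - (a1 * phi1 x + a2 * phi2 x)) phi2.
Proof.
move=> hT [D1 _ _] [D2 _ _] _ Hnz _ _ [C [C0 HO]] Hr Hd.
split => //.
move=> e e0.
have e10 : 0 < e / (1 + 2 * C) by apply: divr_gt0 => //; lra.
have HT : near_left x0 (fun x => T < x) by exists T; split.
have [t [tx0 H]] := near_and (Hr _ e10) (near_and (Hd _ e10) (near_and HO HT)).
exists t; split => // x tx xx0 dfx.
have [/(_ I) hr [/(_ dfx) hd [/(_ I) ho xT]]] := H x tx xx0.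
have [p1 p2 _] := Hnz x (ltW xT) xx0.
have hf := derivableP dfx.
rewrite (quot_der p1 hf (D1 _ xT xx0)) (quot_der p1 (D2 _ xT xx0) (D1 _ xT xx0)) in hd.
rewrite derive1E.
set e1 := e / (1 + 2 * C) in e10 hr hd.
set Fd := 'D_1 f x in hd *.
set r := f x - (a1 * phi1 x + a2 * phi2 x) in hr.
set q := dphi1 x / phi1 x in ho.
set Dd := (Fd * phi1 x - f x * dphi1 x) / phi1 x ^+ 2 in hd.
set E := (dphi2 x * phi1 x - phi2 x * dphi1 x) / phi1 x ^+ 2 in hd.
have id1 : Fd - (a1 * dphi1 x + a2 * dphi2 x) = phi1 x * (Dd - a2 * E) + r * q.
  rewrite /Dd /E /r /q; field; done.
have id2 : phi1 x * E = dphi2 x - phi2 x * q.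
  rewrite /E /q; field; done.
have h1 : `|Fd - (a1 * dphi1 x + a2 * dphi2 x)| <= `|phi1 x| * `|Dd - a2 * E| + `|r| * `|q|.
  by rewrite id1 -!normrM ler_normD.
have h2 := ler_wpM2l (normr_ge0 (phi1 x)) hd.
rewrite [X in _ <= X]mulrCA in h2.
have h3 : `|phi1 x| * `|E| <= `|dphi2 x| + `|phi2 x| * `|q|.
  by rewrite -normrM id2 -normrM ler_normB.
have h4 : `|r| * `|q| <= e1 * (`|phi2 x| * `|q|).
  by rewrite mulrA; apply: ler_wpM2r.
have h5 : `|phi2 x| * `|q| <= C * `|dphi2 x|.
  have -> : C * `|dphi2 x| = `|phi2 x| * (C * `|dphi2 x / phi2 x|).
    rewrite normrM normrV ?unitfE // mulrCA; field; by rewrite normr_eq0.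
  by apply: ler_wpM2l.
have h3' := ler_wpM2l (ltW e10) h3.
have h5' := ler_wpM2l (ltW e10) h5.
have hC : 1 + 2 * C != 0 by apply/negbT; apply: gt_eqF; lra.
have eE : e1 * (1 + 2 * C) = e by rewrite /e1; field.
rewrite -eE.
apply: le_trans h1 _.
apply: le_trans (lerD (le_trans h2 h3') h4) _.
have -> : e1 * (`|dphi2 x| + `|phi2 x| * `|q|) + e1 * (`|phi2 x| * `|q|)
  = e1 * (`|dphi2 x| + 2 * (`|phi2 x| * `|q|)) by ring.
rewrite -mulrA; apply: ler_wpM2l; first exact: ltW.
rewrite mulrDl mul1r.
have -> : (1 + 2 * C) * `|dphi2 x| = `|dphi2 x| + (C * `|dphi2 x| + C * `|dphi2 x|) by ring.
by rewrite lerD2l; apply: lerD.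
Qed.
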